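(* Let $a_0,a_2\in\mathbb{C}$. The second-order recursion $$z_n = \frac{a_2 z_{n-2} + z_{n-1} + a_0}{z_{n-2}}$$ is periodic with period $6$ (i.e. $z_7=z_1$ and $z_8=z_2$ in $\mathbb{C}(z_1,z_2)$) if and only if $a_0=0$ and $a_2=0$, i.e. the recursion is $z_n=z_{n-1}/z_{n-2}$.
   Context: Let $z_1,z_2$ be independent indeterminates over $\mathbb{C}$ and define $z_n\in\mathbb{C}(z_1,z_2)$ for $n\ge3$ by the recursion. A second-order recursion is periodic with period $k$ if all iterates are well-defined elements of $\mathbb{C}(z_1,z_2)$ (no denominator identically zero) and $z_{k+1}=z_1$, $z_{k+2}=z_2$. *)

(* Defs.v *)
From HB Require Import structures.
From mathcomp Require Import all_boot all_order all_algebra.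
From mathcomp Require Import fraction.
From mathcomp Require Import complex.
From mathcomp Require Import Rstruct.
Set Implicit Arguments. Unset Strict Implicit. Unset Printing Implicit Defensive.
Import Order.TTheory GRing.Theory Num.Theory.
Local Open Scope ring_scope.

Definition CC : fieldType := (Rdefinitions.R)[i].

Definition Kz : fieldType := {fraction {poly {poly CC}}}.

Definition z1 : Kz := tofrac ('X%:P : {poly {poly CC}}).
Definition z2 : Kz := tofrac ('X : {poly {poly CC}}).
Definition cst (a : CC) : Kz := tofrac ((a%:P)%:P : {poly {poly CC}}).

(* pairs (z_{n+1}, z_{n+2}) of the recursion
   z_n = (a2 z_{n-2} + z_{n-1} + a0) / z_{n-2}; index shifted: zseq 0 = z_1. *)
Fixpoint zpair (a0 a2 : CC) (n : nat) : Kz * Kz :=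
  match n with
  | 0 => (z1, z2)
  | m.+1 => let p := zpair a0 a2 m in
            (p.2, (cst a2 * p.1 + p.2 + cst a0) / p.1)
  end.

Definition zseq (a0 a2 : CC) (n : nat) : Kz := (zpair a0 a2 n).1.

(* Every z_k (k >= 1) appears as a denominator, so "all iterates well-defined"
   means no z_k is zero in C(z1,z2); period 6 means z_7 = z_1, z_8 = z_2. *)
Definition periodic6 (a0 a2 : CC) : Prop :=
  (forall n, zseq a0 a2 n != 0) /\
  zseq a0 a2 6 = zseq a0 a2 0 /\ zseq a0 a2 7 = zseq a0 a2 1.

(* Main.v *)
Require Import Defs.
From mathcomp Require Import all_boot all_algebra.
From mathcomp Require Import fraction complex Rstruct.
From mathcomp Require Import ring.
Import GRing.Theory Num.Theory.
Local Open Scope ring_scope.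

Lemma zrec a0 a2 k : zseq a0 a2 k.+2 =
  (cst a2 * zseq a0 a2 k + zseq a0 a2 k.+1 + cst a0) / zseq a0 a2 k.
Proof. by []. Qed.

Lemma nz_eval (P : {poly {poly CC}}) c d : P.[c%:P].[d] != 0 -> tofrac P != 0.
Proof. by apply: contra; rewrite tofrac_eq0 => /eqP ->; rewrite !horner0. Qed.

Lemma ev0 (P : {poly {poly CC}}) c d : tofrac P = 0 -> P.[c%:P].[d] = 0.
Proof. by move/eqP; rewrite tofrac_eq0 => /eqP ->; rewrite !horner0. Qed.

Lemma two_nz : (2 : CC) != 0.
Proof. have h : (2 : (Rdefinitions.R)[i]) != 0 by rewrite pnatr_eq0. exact: h. Qed.

Lemma z1_nz : z1 != 0.
Proof. apply: (@nz_eval _ 0 1); rewrite !hornerE; exact: oner_neq0. Qed.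
Lemma z2_nz : z2 != 0.
Proof. apply: (@nz_eval _ 1 0); rewrite !hornerE; exact: oner_neq0. Qed.
Lemma z1A_nz a : z1 - cst a != 0.
Proof.
rewrite /z1 /cst -rmorphB; apply: (@nz_eval _ 0 (a + 1)); rewrite !hornerE.
by rewrite addrAC subrr add0r oner_neq0.
Qed.
Lemma z2A_nz a : z2 - cst a != 0.
Proof.
rewrite /z2 /cst -rmorphB; apply: (@nz_eval _ (a + 1) 0); rewrite !hornerE.
by rewrite addrAC subrr add0r oner_neq0.
Qed.

Lemma cst0 : cst 0 = 0.
Proof. by rewrite /cst !polyC0 rmorph0. Qed.

Definition Qf {R : comRingType} (x y A B : R) : R :=
  let Nv := A * x * y + A * x + y + B + B * x in
  let Ns := x + B + B * y - B * A in
  (x - A) * (x + B) * Nv - A * (y - A) * (x - A) * Nv - x * y * Ns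
  - B * x * y * (y - A) * (x - A).

Lemma alg (K : fieldType) (x y A B u v s t : K) :
  x != 0 -> y != 0 -> x - A != 0 -> y - A != 0 ->
  u = (A * x + y + B) / x -> v = (A * y + u + B) / y ->
  A * t + x + B = y * t -> A * s + t + B = x * s ->
  A * v + s + B = t * v -> Qf x y A B = 0.
Proof.
move=> nz1 nz2 nzA1 nzA2 hu hv e7 e6 e5.
have ht : t = (x + B) / (y - A).
  apply: (canRL (mulfK nzA2)); rewrite mulrBr [t * y]mulrC -e7; ring.
have hs : s = (t + B) / (x - A).
  apply: (canRL (mulfK nzA1)); rewrite mulrBr [s * x]mulrC -e6; ring.
have E : x * y * (y - A) * (x - A) * (t * v - A * v - s - B) = 0.
  by rewrite -e5; ring.
rewrite hs ht hv hu in E.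
rewrite -E /Qf; field.
by rewrite nz1 nz2 nzA1 nzA2.
Qed.

Lemma Qf_morph (R S : comRingType) (f : {rmorphism R -> S}) x y A B :
  f (Qf x y A B) = Qf (f x) (f y) (f A) (f B).
Proof. by rewrite /Qf !(rmorphD, rmorphB, rmorphM, rmorphN). Qed.

Lemma forward a0 a2 : periodic6 a0 a2 -> a0 = 0 /\ a2 = 0.
Proof.
move=> [Hnz [H6 H7]].
have hu := zrec a0 a2 0.
have hv := zrec a0 a2 1.
have e7 := zrec a0 a2 5.
have e6 := zrec a0 a2 4.
have e5 := zrec a0 a2 3.
have nzt := Hnz 5; have nzs := Hnz 4; have nzv := Hnz 3.
rewrite H7 H6 in e7; rewrite H6 in e6.
have hx : zseq a0 a2 0 = z1 by [].
have hy : zseq a0 a2 1 = z2 by [].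
rewrite hx hy in hu e7 e6; rewrite hy in hv.
move: hu hv e7 e6 e5 nzt nzs nzv.
move: (zseq a0 a2 2) (zseq a0 a2 3) (zseq a0 a2 4) (zseq a0 a2 5) => u v s t.
move=> hu hv e7 e6 e5 nzt nzs nzv.
have EQ : Qf z1 z2 (cst a2) (cst a0) = 0.
  move: hu hv e7 e6 e5 => hu hv e7 e6 e5.

  apply: (alg _ _ _ _ _ _ _ s t z1_nz z2_nz (z1A_nz a2) (z2A_nz a2) hu hv).
  - by rewrite e7 divfK.
  - by rewrite e6 divfK.
  - by rewrite e5 divfK.
have EP : tofrac (Qf ('X%:P) 'X ((a2%:P)%:P) ((a0%:P)%:P)) = 0.
  by rewrite Qf_morph.
have ev c d : Qf d c a2 a0 = 0.
  by have := ev0 _ c d EP; rewrite /Qf !hornerE.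
have E1 : a2 * a2 * (1 - a0) = Qf a2 (-1) a2 a0 by rewrite /Qf; ring.
rewrite ev in E1.
have E2 : a2 * (a2 + 2 * a0 - a0 * a2) = - Qf a2 1 a2 a0 by rewrite /Qf; ring.
rewrite ev oppr0 in E2.
have a20 : a2 = 0.
  move/eqP: E1; rewrite !mulf_eq0 orbb => /orP [/eqP //|].
  rewrite subr_eq0 => /eqP a01; move/eqP: E2; rewrite -a01 mulf_eq0.
  case/orP => [/eqP //|]; rewrite mul1r addrAC subrr add0r.
  by rewrite mulr1 (negbTE two_nz).
have E3 : 2 * (a0 * a0) = Qf 1 1 a2 a0 by rewrite /Qf a20; ring.
rewrite ev in E3.
split => //; move/eqP: E3; rewrite mulf_eq0 (negbTE two_nz) /= mulf_eq0 orbb.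
by move/eqP.
Qed.

Lemma step00 p : zpair 0 0 p.+1 =
  ((zpair 0 0 p).2, (zpair 0 0 p).2 / (zpair 0 0 p).1).
Proof. by rewrite /= cst0 mul0r add0r addr0. Qed.

Lemma stepP p a b : zpair 0 0 p = (a, b) -> zpair 0 0 p.+1 = (b, b / a).
Proof. by rewrite step00 => ->. Qed.

Lemma gen (K : fieldType) (x y : K) : x != 0 -> y != 0 ->
  [/\ (y / x) / y = x^-1, x^-1 / (y / x) = y^-1, y^-1 / x^-1 = x / y,
      (x / y) / y^-1 = x & x / (x / y) = y].
Proof. by move=> hx hy; split; field; rewrite ?hx ?hy ?oner_neq0. Qed.

Lemma backward : periodic6 0 0.
Proof.
have n1 := z1_nz; have n2 := z2_nz.
have nz : forall n, (zpair 0 0 n).1 != 0 /\ (zpair 0 0 n).2 != 0.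
  elim=> [|n [h1 h2]]; first by split; [exact n1| exact n2].
  rewrite step00; split; first exact: h2.
  exact: (mulf_neq0 h2 (invr_neq0 h1)).
have [g2 g3 g4 g5 g6] := gen _ _ _ n1 n2.
have p0 : zpair 0 0 0 = (z1, z2) by [].
have p1 := stepP _ _ _ p0.
have p2 := stepP _ _ _ p1; rewrite g2 in p2.
have p3 := stepP _ _ _ p2; rewrite g3 in p3.
have p4 := stepP _ _ _ p3; rewrite g4 in p4.
have p5 := stepP _ _ _ p4; rewrite g5 in p5.
have p6 := stepP _ _ _ p5; rewrite g6 in p6.
have p7 := stepP _ _ _ p6.
split; first by move=> n; case: (nz n) => h _; exact h.
rewrite /zseq p6 p7 p0 p1; exact: (conj erefl erefl).
Qed.

Theorem mainTheorem5 (a0 a2 : CC) :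
  periodic6 a0 a2 <-> (a0 = 0 /\ a2 = 0).
Proof.
split; first exact: forward.
by case=> -> ->; exact: backward.
Qed.
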